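(* Suppose that the cross-partial derivative $\nabla^2_{\psi\lambda}\ell(\psi,\lambda)$ of the assumed log-likelihood depends on the data only through a sufficient statistic $S=(S_1,\ldots,S_k)$, $1\le k\le n$, that it is additive in $S_1,\ldots,S_k$, and that $\mathbb{E}_m(S_j)=\mathbb{E}_{(\psi,\lambda)}(S_j)$ for all $j$. Then a sufficient condition for $\Psi\perp_m\Lambda$ is that $\check\imath_{\psi\lambda}(\psi,\lambda)=0$ for all $(\psi,\lambda)\in\Psi\times\Lambda$; similarly, $\check\imath_{\psi\lambda}=0$ at particular parameter values is sufficient for the corresponding local $m$-orthogonality.
   Context: Observations $Y=(Y_1,\ldots,Y_n)$ have true joint density $m$, depending on an interest parameter $\psi$. An assumed (possibly misspecified) model has joint density $\check m(y;\psi,\lambda)$, $(\psi,\lambda)\in\Psi\times\Lambda$, with log-likelihood $\ell(\psi,\lambda)=\log\check m(y;\psi,\lambda)$. $\mathbb{E}_m$ denotes expectation when $Y$ has density $m$, and $\mathbb{E}_{(\psi,\lambda)}$ denotes expectation under the assumed model. $\check\imath_{\psi\lambda}(\psi,\lambda)=\mathbb{E}_{(\psi,\lambda)}[-\nabla^2_{\psi\lambda}\ell(\psi,\lambda)]$. The notation $\Psi\perp_m\Lambda$ ($m$-orthogonality) means $\mathbb{E}_m[\nabla^2_{\psi\lambda}\ell(\psi,\lambda)]=0$ for all $(\psi,\lambda)\in\Psi\times\Lambda$; local $m$-orthogonality means this holds at particular values (e.g. $\Psi\perp_m\lambda$: at a given $\lambda$ for all $\psi$; $\psi\perp_m\Lambda$: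 at a given $\psi$ for all $\lambda$). *)

(* Defs.v *)
From HB Require Import structures.
From mathcomp Require Import all_boot all_order all_algebra.
From mathcomp Require Import all_classical all_reals all_analysis.
Set Implicit Arguments. Unset Strict Implicit. Unset Printing Implicit Defensive.
Import Order.TTheory GRing.Theory Num.Theory.
Import numFieldNormedType.Exports.
Local Open Scope classical_set_scope.
Local Open Scope ring_scope.

Definition xpartial {R : realType} {p q : nat}
  (f : 'rV[R]_p -> 'rV[R]_q -> R) (psi : 'rV[R]_p) (lam : 'rV[R]_q)
  : 'M[R]_(p, q) :=
  \matrix_(i < p, j < q)
    derive (fun lam' : 'rV[R]_q =>
              derive (fun psi' : 'rV[R]_p => f psi' lam') psi (delta_mx 0 i))
           lam (delta_mx 0 j).

Definition loglik {R : realType} {Y : Type} {p q : nat}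
  (mc : 'rV[R]_p -> 'rV[R]_q -> Y -> R) (y : Y) : 'rV[R]_p -> 'rV[R]_q -> R :=
  fun psi lam => ln (mc psi lam y).

Definition is_density {R : realType} {d : measure_display} {Y : measurableType d}
  (mu : {measure set Y -> \bar R}) (g : Y -> R) : Prop :=
  [/\ measurable_fun setT g, (forall y, 0 <= g y)
    & (\int[mu]_y (g y)%:E = 1)%E].

Definition Edens {R : realType} {d : measure_display} {Y : measurableType d}
  (mu : {measure set Y -> \bar R}) (g : Y -> R) (f : Y -> R) : \bar R :=
  (\int[mu]_y (f y * g y)%:E)%E.

(* S = (S_1,...,S_k) is sufficient for the assumed model on Psi x Lam
   (Fisher--Neyman factorization of the density). *)
Definition sufficient {R : realType} {Y : Type} {p q k : nat}
  (Psi : set 'rV[R]_p) (Lam : set 'rV[R]_q)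
  (mc : 'rV[R]_p -> 'rV[R]_q -> Y -> R) (S : 'I_k -> Y -> R) : Prop :=
  exists (g : 'rV[R]_p -> 'rV[R]_q -> ('I_k -> R) -> R) (h : Y -> R),
    forall psi lam y, Psi psi -> Lam lam ->
      mc psi lam y = g psi lam (fun j => S j y) * h y.

Definition icheck {R : realType} {d : measure_display} {Y : measurableType d}
  {p q : nat} (mu : {measure set Y -> \bar R})
  (mc : 'rV[R]_p -> 'rV[R]_q -> Y -> R) (psi : 'rV[R]_p) (lam : 'rV[R]_q)
  (i : 'I_p) (j : 'I_q) : \bar R :=
  Edens mu (mc psi lam) (fun y => - xpartial (loglik mc y) psi lam i j).

(* m-orthogonality at (psi, lambda): E_m[ nabla^2_{psi lambda} l(psi,lambda) ] = 0,
   the true density being m_psi. *)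
Definition m_orth_at {R : realType} {d : measure_display} {Y : measurableType d}
  {p q : nat} (mu : {measure set Y -> \bar R}) (m : 'rV[R]_p -> Y -> R)
  (mc : 'rV[R]_p -> 'rV[R]_q -> Y -> R) (psi : 'rV[R]_p) (lam : 'rV[R]_q) : Prop :=
  forall i j, Edens mu (m psi) (fun y => xpartial (loglik mc y) psi lam i j) = 0%E.

(* Main.v *)
Require Import Defs.
From HB Require Import structures.
From mathcomp Require Import all_boot all_order all_algebra.
From mathcomp Require Import all_classical all_reals all_analysis.
From mathcomp Require Import measurable_realfun.
From mathcomp Require Import ring.
Import Order.TTheory GRing.Theory Num.Theory.
Import numFieldNormedType.Exports.
Local Open Scope classical_set_scope.
Local Open Scope ring_scope.

Lemma dens_int (R : realType) (d : measure_display) (Y : measurableType d)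
  (mu : {measure set Y -> \bar R}) (g : Y -> R) :
  is_density mu g -> mu.-integrable setT (fun y => (g y)%:E).
Proof.
case=> mg g0 g1; apply/integrableP; split.
  exact/measurable_EFinP.
rewrite (eq_integral (fun y => (g y)%:E)); last by move=> y _; rewrite gee0_abs ?lee_fin.
by rewrite g1 ltry.
Qed.

Lemma lin_int (R : realType) (d : measure_display) (Y : measurableType d)
  (mu : {measure set Y -> \bar R}) (k : nat) (S : 'I_k -> Y -> R) (g : Y -> R)
  (c : R) (e : 'I_k -> R) :
  is_density mu g ->
  (forall j, mu.-integrable setT (fun y => (S j y * g y)%:E)) ->
  Edens mu g (fun y => c + \sum_(j < k) S j y * e j) =
  (c + \sum_(j < k) e j * fine (Edens mu g (S j)))%:E.
Proof.
move=> hg hS.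
have ig := @dens_int _ _ _ mu g hg.
have mT : measurable [set: Y] := measurableT.
rewrite /Edens.
rewrite (eq_integral (fun y => (c%:E * (g y)%:E) + \sum_(j < k) ((e j)%:E * (S j y * g y)%:E))%E); last first.
  move=> y _; rewrite sumEFin -!EFinM -EFinD; congr (_%:E).
  rewrite mulrDl big_distrl /=; congr (_ + _); apply: eq_bigr => j _; ring.
rewrite integralD; last 3 first.
- exact: measurableT.
- exact: integrableZl.
- apply: integrable_sum; first exact: measurableT.
  by move=> j _; apply: integrableZl.
rewrite integralZl // integral_sum; last 2 first.
  exact: measurableT.
  by move=> j; apply: integrableZl.
case: hg => _ _ ->; rewrite mule1 EFinD -sumEFin; congr (_ + _)%E.
apply: eq_bigr => j _; rewrite integralZl // EFinM fineK //.
exact: integrable_fin_num.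
Qed.

Lemma Edens_ext (R : realType) (d : measure_display) (Y : measurableType d)
  (mu : {measure set Y -> \bar R}) (g f f' : Y -> R) :
  (forall y, f y = f' y) -> Edens mu g f = Edens mu g f'.
Proof. by move=> h; rewrite /Edens; apply: eq_integral => y _; rewrite h. Qed.

Theorem corollary1 (R : realType) (d : measure_display) (Y : measurableType d)
  (mu : {measure set Y -> \bar R}) (p q k : nat)
  (Psi : set 'rV[R]_p) (Lam : set 'rV[R]_q)
  (m : 'rV[R]_p -> Y -> R) (mc : 'rV[R]_p -> 'rV[R]_q -> Y -> R)
  (S : 'I_k -> Y -> R) :
  (0 < k)%N ->
  (forall psi, Psi psi -> is_density mu (m psi)) ->
  (forall psi lam, Psi psi -> Lam lam -> is_density mu (mc psi lam)) ->
  sufficient Psi Lam mc S ->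
  (exists (a : 'rV[R]_p -> 'rV[R]_q -> 'M[R]_(p, q))
          (b : 'I_k -> 'rV[R]_p -> 'rV[R]_q -> 'M[R]_(p, q)),
     forall psi lam y, Psi psi -> Lam lam ->
       xpartial (loglik mc y) psi lam = a psi lam + \sum_(j < k) S j y *: b j psi lam) ->
  (forall psi lam (j : 'I_k), Psi psi -> Lam lam ->
     mu.-integrable setT (fun y => (S j y * m psi y)%:E) /\
     mu.-integrable setT (fun y => (S j y * mc psi lam y)%:E)) ->
  (forall psi lam (j : 'I_k), Psi psi -> Lam lam ->
     Edens mu (m psi) (S j) = Edens mu (mc psi lam) (S j)) ->
  forall A : set ('rV[R]_p * 'rV[R]_q), A `<=` Psi `*` Lam ->
    (forall x, A x -> forall i j, icheck mu mc x.1 x.2 i j = 0%E) ->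
    forall x, A x -> m_orth_at mu m mc x.1 x.2.
Proof.
move=> _ hm hmc _ [a [b hab]] hint hE A sA hi [psi lam] Ax i j /=.
have [/= Ppsi Llam] := sA _ Ax.
have := hi _ Ax i j; rewrite /icheck /=.
have ex : forall y, xpartial (loglik mc y) psi lam i j =
    a psi lam i j + \sum_(l < k) S l y * b l psi lam i j.
  move=> y; rewrite hab // !mxE summxE; congr (_ + _).
  by apply: eq_bigr => l _; rewrite !mxE.
rewrite (@Edens_ext _ _ _ mu _ _ (fun y => - a psi lam i j + \sum_(l < k) S l y * - b l psi lam i j)); last first.
  by move=> y; rewrite ex opprD -sumrN; congr (_ + _); apply: eq_bigr => l _; rewrite mulrN.
rewrite lin_int; last 2 first.
- exact: hmc.
- by move=> l; case: (hint psi lam l Ppsi Llam).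
move=> /eqP; rewrite eqe => /eqP h0.
rewrite (@Edens_ext _ _ _ mu _ _ _ ex) lin_int; last 2 first.
- exact: hm.
- by move=> l; case: (hint psi lam l Ppsi Llam).
apply/eqP; rewrite eqe; apply/eqP.
apply: oppr_inj; rewrite [RHS]oppr0 -[RHS]h0.
rewrite opprD -sumrN; congr (_ + _); apply: eq_bigr => l _.
by rewrite (hE psi lam l Ppsi Llam) mulNr.
Qed.
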